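(* An automaton $\mathcal{A}=\langle Q,A,\cdot,q_0,F\rangle$ is quasi-zero if and only if its quotient automaton $\mathcal{A}/\!\sim$ (which is the minimal automaton of $L(\mathcal{A})$) is a zero automaton.
   Context: Automata are complete, deterministic, finite, accessible. For a state $q$, $\mathrm{Fut}(q)=\{w: q\cdot w\in F\}$. The Nerode equivalence is $p\sim q$ iff $\mathrm{Fut}(p)=\mathrm{Fut}(q)$; the quotient automaton $\mathcal{A}/\!\sim$ has states the classes $[q]$, initial state $[q_0]$, final states $\{[q]:q\in F\}$ and transitions $[p]\cdot a=[p\cdot a]$. A strongly connected sink component is a nonempty $P\subseteq Q$ such that every state of $P$ is reachable from every other state of $P$ and no state outside $P$ is reachable from $P$; $\mathrm{Sink}(\mathcal{A})$ is the family of these. $\mathcal{A}$ is quasi-zero if either $\bigcup\mathrm{Sink}(\mathcal{A})\subseteq F$ or $\bigcup\mathrm{Sink}(\mathcal{A})\cap F=\emptyset$. A zero automaton is an automaton with a sink state ($q\cdot a=q$ for all $a$) and a synchronising word (a word $w$ with $p\cdot w$ the same for all $p$). *)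

(* Defs.v *)
From Stdlib Require Import ClassicalDescription.
From HB Require Import structures.
From mathcomp Require Import all_boot.
Set Implicit Arguments. Unset Strict Implicit. Unset Printing Implicit Defensive.

Record dfa (A : finType) := DFA {
  st : finType;
  tr : st -> A -> st;
  init : st;
  fin : {set st}
}.

Section Automata.
Variable A : finType.
Variable d : dfa A.

Definition act (q : st d) (w : seq A) : st d := foldl (@tr A d) q w.

Definition accessible : Prop := forall q : st d, exists w, act (init d) w = q.

Definition Fut (q : st d) : seq A -> Prop := fun w => act q w \in fin d.

Definition nerode (p q : st d) : Prop := forall w, Fut p w <-> Fut q w.

Definition is_sink_comp (P : {set st d}) : Prop :=
  P != set0 /\
  (forall p q, p \in P -> q \in P -> exists w, act p w = q) /\
  (forall p w, p \in P -> act p w \in P).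

Definition in_union_sinks (x : st d) : Prop :=
  exists P, is_sink_comp P /\ x \in P.

Definition quasi_zero : Prop :=
  (forall x, in_union_sinks x -> x \in fin d) \/
  (forall x, in_union_sinks x -> x \notin fin d).

Definition nerodeb (p q : st d) : bool :=
  if excluded_middle_informative (nerode p q) then true else false.

Definition cls (q : st d) : {set st d} := [set p | nerodeb p q].

Definition is_class (C : {set st d}) : bool := [exists q, C == cls q].

Definition qst : finType := {C : {set st d} | is_class C}.

Lemma cls_is_class (q : st d) : is_class (cls q).
Proof. by apply/existsP; exists q. Qed.

Definition class_of (q : st d) : qst := exist _ (cls q) (cls_is_class q).

Definition rep (C : qst) : st d := odflt (init d) [pick x in sval C].

Definition qtr (C : qst) (a : A) : qst := class_of (tr (rep C) a).

Definition qfin : {set qst} := [set C | [exists q in fin d, C == class_of q]].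

Definition quotient : dfa A := @DFA A qst qtr (class_of (init d)) qfin.

End Automata.

Definition zero_automaton (A : finType) (d : dfa A) : Prop :=
  (exists z : st d, forall a, tr z a = z) /\
  (exists w : seq A, forall p q : st d, act p w = act q w).

(* Main.v *)
Require Import Defs.
From mathcomp Require Import all_boot.
From Stdlib Require Import ClassicalDescription.
Set Implicit Arguments. Unset Strict Implicit. Unset Printing Implicit Defensive.

Section Helpers.
Variable A : finType.
Variable d : dfa A.

Lemma act_cat (p : st d) u v : act p (u ++ v) = act (act p u) v.
Proof. by rewrite /act foldl_cat. Qed.

Lemma act_cons (p : st d) a u : act p (a :: u) = act (tr p a) u.
Proof. by []. Qed.

Lemma nerodebP (p q : st d) : reflect (nerode p q) (nerodeb p q).
Proof. by rewrite /nerodeb; case: excluded_middle_informative => h; constructor. Qed.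

Lemma nerode_refl (p : st d) : nerode p p.
Proof. by move=> w. Qed.

Lemma nerode_sym (p q : st d) : nerode p q -> nerode q p.
Proof. by move=> h w; split => /h. Qed.

Lemma nerode_trans (p q r : st d) : nerode p q -> nerode q r -> nerode p r.
Proof. by move=> h1 h2 w; split => [/h1/h2|/h2/h1]. Qed.

Lemma nerode_tr (p q : st d) a : nerode p q -> nerode (tr p a) (tr q a).
Proof. by move=> h w; apply: (h (a :: w)). Qed.

Lemma class_ofE (p q : st d) : class_of p = class_of q <-> nerode p q.
Proof.
split.
- move=> /(congr1 val) /= /setP /(_ p).
  rewrite !inE => e.
  have : nerodeb p p by apply/nerodebP; apply: nerode_refl.
  by rewrite e => /nerodebP.
- move=> h; apply: val_inj => /=; apply/setP => x; rewrite !inE.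
  apply/nerodebP/nerodebP => hx.
  + exact: nerode_trans hx h.
  + exact: nerode_trans hx (nerode_sym h).
Qed.

Lemma rep_class (p : st d) : nerode (rep (class_of p)) p.
Proof.
rewrite /rep /=.
case: pickP => [x|] /=.
- by rewrite inE => /nerodebP.
- move=> /(_ p); rewrite inE.
  by have /nerodebP -> := nerode_refl p.
Qed.

Lemma qtr_class (p : st d) a : qtr (class_of p) a = class_of (tr p a).
Proof. by apply/class_ofE; apply: nerode_tr; apply: rep_class. Qed.

Lemma class_rep (C : qst d) : class_of (rep C) = C.
Proof.
case: C => C hC.
have [q /eqP eC] := existsP hC.
subst C.
have -> : (exist _ (cls q) hC : qst d) = class_of q by apply: val_inj.
by apply/class_ofE; apply: rep_class.
Qed.

Lemma qact_class (p : st d) w :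
  @act A (quotient d) (class_of p) w = class_of (act p w).
Proof.
elim: w p => [|a w IH] p //=.
rewrite qtr_class.
exact: IH.
Qed.

Lemma qfin_class (p : st d) : (class_of p \in qfin d) = (p \in fin d).
Proof.
rewrite /qfin inE.
apply/existsP/idP => [[q /andP [qF /eqP /class_ofE h]]|pF].
- by have := h [::]; rewrite /Fut /= => ->.
- by exists p; rewrite pF eqxx.
Qed.

Definition reachb (p q : st d) : bool :=
  if excluded_middle_informative (exists w, act p w = q) then true else false.

Lemma reachP (p q : st d) : reflect (exists w, act p w = q) (reachb p q).
Proof. by rewrite /reachb; case: excluded_middle_informative => h; constructor. Qed.

Definition R (p : st d) : {set st d} := [set x | reachb p x].

Lemma reach_trans p q r : reachb p q -> reachb q r -> reachb p r.
Proof.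
move=> /reachP [u <-] /reachP [v <-]; apply/reachP; exists (u ++ v).
by rewrite act_cat.
Qed.

Lemma reach_refl p : reachb p p.
Proof. by apply/reachP; exists [::]. Qed.

Lemma reach_sink (q : st d) :
  exists P, is_sink_comp P /\ exists u, act q u \in P.
Proof.
have [n hq] : exists n, #|R q| <= n by exists #|R q|.
elim: n q hq => [|n IH] q hq.
- have hin : q \in R q by rewrite inE reach_refl.
  have : 0 < #|R q| by apply/card_gt0P; exists q.
  by rewrite ltnNge hq.
- case: (boolP [forall p in R q, reachb p q]) => [/forallP hall|].
  + exists (R q); split; last by exists [::]; rewrite inE reach_refl.
    split; first by apply/set0Pn; exists q; rewrite inE reach_refl.
    split.
    * move=> p1 p2; rewrite !inE => h1 h2; apply/reachP.
      by apply: reach_trans h2; move: (hall p1); rewrite inE h1 /= => ->.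
    * move=> p w; rewrite !inE => hp; apply: reach_trans hp _.
      by apply/reachP; exists w.
  + rewrite negb_forall => /existsP [p].
    rewrite negb_imply inE => /andP [hqp hpq].
    have sub : R p \proper R q.
      apply/properP; split.
      * by apply/subsetP => x; rewrite !inE; apply: reach_trans.
      * by exists q; rewrite !inE ?reach_refl.
    have hlt : #|R p| <= n.
      by rewrite -ltnS; apply: leq_trans (proper_card sub) hq.
    have [P [hP [u hu]]] := IH p hlt.
    move: hqp => /reachP [v hv].
    exists P; split => //; exists (v ++ u); by rewrite act_cat hv.
Qed.

Definition good (b : bool) (q : st d) := forall u, (act q u \in fin d) = b.

Lemma good_act b q w : good b q -> good b (act q w).
Proof. by move=> h u; rewrite -act_cat. Qed.

Lemma sync_good b :
  (forall q, exists u, good b (act q u)) ->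
  exists w, forall q, good b (act q w).
Proof.
move=> hreach.
suff [w hw] : exists w, forall q, q \in enum (st d) -> good b (act q w).
  by exists w => q; apply: hw; rewrite mem_enum.
elim: (enum (st d)) => [|p s [w hw]]; first by exists [::].
have [u hu] := hreach (act p w).
exists (w ++ u) => q; rewrite inE => /orP [/eqP ->|hq]; rewrite act_cat //.
exact: good_act u (hw q hq).
Qed.

End Helpers.

Theorem proposition7 (A : finType) (d : dfa A) :
  accessible d -> (quasi_zero d <-> zero_automaton (quotient d)).
Proof.
move=> _; split.
- move=> hqz.
  have [b hb] : exists b, forall x, in_union_sinks x -> (x \in fin d) = b.
    case: hqz => h; [exists true | exists false] => x /h; [by [] | by move/negbTE].
  have hreach : forall q : st d, exists u, good b (act q u).
    move=> q; have [P [hP [u hu]]] := reach_sink q.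
    exists u => v; apply: hb; exists P; split => //.
    by case: hP => _ [_ hcl]; apply: hcl.
  have goodE : forall p q : st d, good b p -> good b q -> class_of p = class_of q.
    move=> p q hp hq; apply/class_ofE => w; rewrite /Fut hp hq; by [].
  have [g hg] := hreach (init d).
  have [w hw] := sync_good hreach.
  split.
  + exists (class_of (act (init d) g)) => a /=.
    rewrite qtr_class; apply: goodE => //; first by apply: (good_act [:: a]).
  + exists w => C D.
    rewrite -(class_rep C) -(class_rep D) !qact_class.
    by apply: goodE.
- case=> [[z hz] [w hw]].
  have zact : forall u, @act A (quotient d) z u = z.
    elim => [|a u IH] //=; by have := hz a; rewrite /= => ->.
  have hsink : forall x, in_union_sinks x -> class_of x = z.
    move=> x [P [[_ [hconn hcl]] hx]].
    have hy : act x w \in P by apply: hcl.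
    have [v hv] := hconn _ _ hy hx.
    have e1 : class_of (act x w) = z.
      by rewrite -qact_class (hw _ z) zact.
    by rewrite -hv -qact_class e1 zact.
  case: (boolP (z \in qfin d)) => hzf; [left|right] => x hx;
    by rewrite -qfin_class hsink.
Qed.
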